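(* Let $n\ge3$ and $2\le m\le n-1$. Then $$\mathcal{H}^{[n]}_{K;m}(t)=\sum_{k\ge1}c^{[n]}_{k;m}t^k=\frac{t^{m-1}\mathcal{A}_{m-2}(1/t)}{t^n\mathcal{K}_n(1/t)}.$$
   Context: $K^{\infty}_n=\langle y_1,\dots,y_n\mid y_iy_j=y_jy_i\ (j+2\le i\le n-1),\ y_ny_k=y_ky_n\ (1\le k\le n-3)\rangle$. $c^{[n]}_{k;m}$ is the number of elements of $K^\infty_n$ of length $k$ whose smallest representative word in length-lexicographic order ($y_1<\cdots<y_n$) begins with $y_m$. $\mathcal{K}_n(\lambda)=\det(\lambda I_n-M_n)$ where $(M_n)_{j,i}=1$ if $i\ge j-1$ or $(j,i)=(n,n-2)$, $0$ otherwise. $\mathcal{A}_r(\lambda)=\det(\lambda I_r-N_r)$ for $r\ge1$ with $(N_r)_{j,i}=1$ if $i\ge j-1$, $0$ otherwise, and $\mathcal{A}_0=1$. *)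

(* Defs.v *)
From HB Require Import structures.
From mathcomp Require Import all_boot all_order all_algebra.
Set Implicit Arguments. Unset Strict Implicit. Unset Printing Implicit Defensive.
Import GRing.Theory Num.Theory.

(* Letters are 1-based naturals: y_a is the letter a, 1 <= a <= n. *)

(* y_a and y_b commute as a defining relation of K^oo_n (a <> b). *)
Definition kcomm (n a b : nat) : bool :=
  [|| [&& a <= n.-1, b <= n.-1 & (a + 2 <= b) || (b + 2 <= a)],
      (a == n) && (1 <= b <= n - 3) |
      (b == n) && (1 <= a <= n - 3)].

Definition swap_at (u : seq nat) (i : nat) : seq nat :=
  take i u ++ [:: nth 0 u i.+1; nth 0 u i] ++ drop i.+2 u.

Definition kstep (n : nat) (u v : seq nat) : bool :=
  has (fun i => [&& i.+1 < size u, kcomm n (nth 0 u i) (nth 0 u i.+1)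
                  & v == swap_at u i]) (iota 0 (size u)).

Fixpoint lexle (u v : seq nat) : bool :=
  match u, v with
  | [::], _ => true
  | _ :: _, [::] => false
  | a :: u', b :: v' => (a < b) || ((a == b) && lexle u' v')
  end.

Definition kword (n k : nat) (w : k.-tuple 'I_n) : seq nat :=
  [seq (val i).+1 | i <- w].

Definition kequiv (n k : nat) : rel (k.-tuple 'I_n) :=
  connect (fun u v => kstep n (kword u) (kword v)).

(* c^[n]_{k;m}: number of elements of length k whose length-lex smallest
   representative begins with y_m (= number of words of length k that are
   lex-minimal in their class and start with the letter m). *)
Definition cnum (n k m : nat) : nat :=
  #|[set w : k.-tuple 'I_n |
      (head 0 (kword w) == m) &&
      [forall w' : k.-tuple 'I_n, kequiv w w' ==> lexle (kword w) (kword w')]]|.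

(* the matrices M_n and N_r (row index j, column index i, 0-based) *)
Definition Mmat (n : nat) : 'M[int]_n :=
  \matrix_(j < n, i < n)
     ((j <= i.+1)%N || ((j == n.-1 :> nat) && (i == (n - 3)%N :> nat)))%:R%R.

Definition Nmat (r : nat) : 'M[int]_r :=
  \matrix_(j < r, i < r) (j <= i.+1)%N%:R%R.

(* K_n(lambda) and A_r(lambda) (char_poly of a 0x0 matrix is 1) *)
Definition Kpoly (n : nat) : {poly int} := char_poly (Mmat n).
Definition Apoly (r : nat) : {poly int} := char_poly (Nmat r).

(* recip d p = t^d p(1/t), for size p <= d+1 *)
Definition recip (d : nat) (p : {poly int}) : {poly int} :=
  \poly_(i < d.+1) nth 0%R p (d - i).

(* Main.v *)
Require Import Defs.
From mathcomp Require Import all_boot all_order all_algebra zify ring.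
Import GRing.Theory Num.Theory.

Lemma kcomm_sym n a b : kcomm n a b = kcomm n b a.
Proof. rewrite /kcomm. by case: (a == n); case: (b==n); rewrite ?andbF ?andbT; lia. Qed.
Lemma kcomm_irr n a : kcomm n a a = false.
Proof. rewrite /kcomm; apply/negbTE; lia. Qed.

Definition al n a b := ~~ ((b < a) && kcomm n a b).

Lemma al_step n b x y : 0 < y -> b < x -> kcomm n x b -> kcomm n y b -> al n x y -> b < y.
Proof. rewrite /al /kcomm; lia. Qed.

Lemma al_last n b x : b < x -> kcomm n x b -> al n x b = false.
Proof. rewrite /al => -> ->; by []. Qed.

Lemma lexle_refl s : lexle s s.
Proof. by elim: s => //= a s ->; rewrite eqxx orbT. Qed.

Lemma lexle_cat p s1 s2 : lexle (p ++ s1) (p ++ s2) = lexle s1 s2.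
Proof. by elim: p => //= a p ->; rewrite ltnn eqxx. Qed.

Lemma notin_take_index (b : nat) s : b \notin take (index b s) s.
Proof. elim: s => //= y s IH. case: eqP => [->|/eqP ne] //=. by rewrite inE negb_or eq_sym ne. Qed.

Lemma walk n b s x : b < x -> kcomm n x b -> path (al n) x s -> all (fun a => 0 < a) s -> b \in s ->
  (forall y, y \in take (index b s) s -> kcomm n y b) -> False.
Proof.
elim: s x => //= y s IH x bx kx /andP[axy ps] /andP[y0 pos].
have [yb|nyb] := eqVneq y b.
  by move=> _ _; rewrite yb al_last in axy.
rewrite inE eq_sym (negbTE nyb) /= => bs H.
have ky : kcomm n y b by apply: H; rewrite inE eqxx.
apply: (IH y) => //. exact: (@al_step n b x y y0 bx kx ky axy).
all: try done.
by move=> z zs; apply: H; rewrite inE zs orbT.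
Qed.

Lemma prefix_comm n b s s1' y : y \in take (index b s) s ->
  filter (pred2 y b) s = filter (pred2 y b) (b :: s1') -> kcomm n y b.
Proof.
move=> yt. rewrite -[in X in X = _ -> _](cat_take_drop (index b s) s) filter_cat /= eqxx orbT.
have : has (pred2 y b) (take (index b s) s) by apply/hasP; exists y => //=; rewrite eqxx.
rewrite has_filter. case E: (filter _ _) => [|z t] //= _ [zb].
have : z \in filter (pred2 y b) (take (index b s) s) by rewrite E inE eqxx.
by rewrite mem_filter zb (negbTE (notin_take_index b s)) andbF.
Qed.

Definition projeq n (s s' : seq nat) :=
  forall p q, ~~ kcomm n p q -> filter (pred2 p q) s = filter (pred2 p q) s'.

Lemma main_lex n s s' : sorted (al n) s -> all (fun a => 0 < a) s -> size s = size s' ->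
  projeq n s s' -> lexle s s'.
Proof.
elim: s s' => [|a s1 IH] [|b s1'] //= ps /andP[a0 pos] [sz] pe.
have [ab|nab] := eqVneq a b.
  subst b. rewrite ltnn /=. apply: IH => //; first exact: path_sorted ps.
  move=> p q npq; have := pe p q npq => /=. by case: ifP => // _ [].
move: pe nab; move: b => b pe nab.
case: (ltngtP a b) => // [ba|]; last by move=> e; rewrite e eqxx in nab.
exfalso.
have bs : b \in s1.
  have E := pe b b (negbT (kcomm_irr n b)).
  have : b \in filter (pred2 b b) (b :: s1') by rewrite mem_filter /= eqxx inE eqxx.
  rewrite -E mem_filter /= eqxx /= inE => /orP[/eqP ba'|//].
  by rewrite ba' eqxx in nab.
have pre : forall y, y \in take (index b (a :: s1)) (a :: s1) -> kcomm n y b.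
  move=> y yt. apply/contraT => nk.
  by have := @prefix_comm n b (a :: s1) s1' y yt (pe y b nk); rewrite (negbTE nk).
have ina : forall y, y \in take (index b s1) s1 -> y \in take (index b (a :: s1)) (a :: s1).
  by move=> y yt; rewrite /= (negbTE nab) /= inE yt orbT.
apply: (@walk n b s1 a) => //.
  by apply: pre; rewrite /= (negbTE nab) /= inE eqxx.
by move=> y /ina /pre.
Qed.

Lemma split2 (T : Type) (x0 : T) u i : i.+1 < size u ->
  u = take i u ++ [:: nth x0 u i; nth x0 u i.+1] ++ drop i.+2 u.
Proof.
move=> h. rewrite -{1}(cat_take_drop i u) (drop_nth x0) ?(drop_nth x0 (n:=i.+1)) //.
exact: ltnW.
Qed.
Arguments split2 {T} x0 {u i}.

Lemma kstep_proj {n u v p q} : ~~ kcomm n p q -> kstep n u v ->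
  filter (pred2 p q) u = filter (pred2 p q) v.
Proof.
move=> npq /hasP[i _ /and3P[hi kc /eqP ->]].
rewrite {1}(split2 0 hi) /swap_at !filter_cat; congr (_ ++ _).
congr (_ ++ _). move: (nth 0 u i) (nth 0 u i.+1) kc => a b kc /=.
have : ~~ (pred2 p q a && pred2 p q b).
  apply/andP => -[/orP[]/eqP ea /orP[]/eqP eb]; subst;
    by rewrite ?kcomm_irr ?(negbTE npq) // kcomm_sym (negbTE npq) in kc.
rewrite /=; by case: ((a == p) || (a == q)); case: ((b == p) || (b == q)).
Qed.

Lemma kequiv_proj n k (w w' : k.-tuple 'I_n) : kequiv w w' -> projeq n (kword w) (kword w').
Proof.
move=> /connectP[s ps ->] p q npq.
elim: s w ps => //= v s IH w /andP[st ps].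
by rewrite (kstep_proj npq st) (IH v ps).
Qed.

Definition swapS (T : Type) (x0 : T) u i := take i u ++ [:: nth x0 u i.+1; nth x0 u i] ++ drop i.+2 u.

Arguments swapS {T}.

Lemma size_swapS (T : Type) (x0 : T) u i : i.+1 < size u -> size (swapS x0 u i) = size u.
Proof. move=> h; rewrite /swapS !size_cat size_take size_drop /=. case: ifP; lia. Qed.

Lemma map_swapS (T U : Type) (f : T -> U) (x0 : T) (y0 : U) (u : seq T) i : i.+1 < size u ->
  map f (swapS x0 u i) = swapS y0 (map f u) i.
Proof.
move=> h; rewrite /swapS !map_cat map_take map_drop /= (nth_map x0) ?(nth_map x0) //.
exact: ltnW.
Qed.
Arguments map_swapS {T U} f x0 y0 {u i}.

Lemma lexmin_sorted n k (w : k.-tuple 'I_n) :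
  (forall w', kequiv w w' -> lexle (kword w) (kword w')) -> sorted (al n) (kword w).
Proof.
move=> H; apply/(sortedP 0) => i hi; apply/negP => /andP[ba kc].
have hk : i.+1 < k by move: hi; rewrite /kword size_map size_tuple.
pose x0 := tnth w (Ordinal (ltnW hk)).
have sz : size (swapS x0 w i) == k by rewrite size_swapS size_tuple.
pose w' : k.-tuple 'I_n := Tuple sz.
have kw : kword w' = swap_at (kword w) i.
  by rewrite /kword /= (map_swapS _ x0 0) // size_tuple.
have : kequiv w w'.
  apply: connect1; rewrite kw; apply/hasP; exists i; first by rewrite mem_iota; lia.
  by rewrite hi kc eqxx.
move/H; rewrite kw /swap_at {1}(split2 0 hi) lexle_cat /=.
by rewrite ltnNge (ltnW ba) /= eq_sym (ltn_eqF ba).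
Qed.

Lemma kword_pos n k (w : k.-tuple 'I_n) : all (fun a => 0 < a) (kword w).
Proof. by apply/allP => a /mapP[x _ ->]. Qed.

Lemma lexmin_iff n k (w : k.-tuple 'I_n) :
  [forall w' : k.-tuple 'I_n, kequiv w w' ==> lexle (kword w) (kword w')] = sorted (al n) (kword w).
Proof.
apply/forallP/idP => [H|S w'].
  by apply: lexmin_sorted => w' /(implyP (H w')).
apply/implyP => E; apply: main_lex; [exact: S | exact: kword_pos | | exact: kequiv_proj].
by rewrite /kword !size_map !size_tuple.
Qed.


Definition cnt n k m := #|[set w : k.-tuple 'I_n | (head 0 (kword w) == m) && sorted (al n) (kword w)]|.

Lemma cntE n k m : cnt n k m = \sum_(w : k.-tuple 'I_n) ((head 0 (kword w) == m) && sorted (al n) (kword w)).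
Proof. by rewrite /cnt -sum1dep_card big_mkcond. Qed.

Lemma sum_tupleS (T : finType) l (F : l.+1.-tuple T -> nat) :
  \sum_(w : l.+1.-tuple T) F w = \sum_(a : T) \sum_(t : l.-tuple T) F [tuple of a :: t].
Proof.
rewrite pair_big /=.
rewrite (reindex (fun p : T * l.-tuple T => [tuple of p.1 :: p.2])) //=.
exists (fun w => (thead w, behead_tuple w)) => [[a t] _|w _] /=.
  by congr pair; apply: val_inj.
by rewrite -tuple_eta.
Qed.

Lemma sorted_cons n x s : s != [::] -> sorted (al n) (x :: s) = al n x (head 0 s) && sorted (al n) s.
Proof. by case: s. Qed.

Lemma kword_head n l (t : l.+1.-tuple 'I_n) : head 0 (kword t) = (thead t).+1.
Proof. by rewrite [t]tuple_eta /kword. Qed.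

Lemma kword_nil n l (t : l.+1.-tuple 'I_n) : kword t != [::].
Proof. by rewrite [t]tuple_eta /kword. Qed.

Lemma path_kword n l x (t : l.+1.-tuple 'I_n) :
  path (al n) x [seq (nat_of_ord i).+1 | i <- t] = al n x (thead t).+1 && sorted (al n) (kword t).
Proof. by rewrite [t]tuple_eta /kword. Qed.

Lemma cnt_rec n l (j : 'I_n) :
  cnt n l.+2 j.+1 = \sum_(i < n) al n j.+1 i.+1 * cnt n l.+1 i.+1.
Proof.
rewrite cntE sum_tupleS (bigD1 j) //= [X in _ + X]big1 ?addn0; last first.
  move=> a /negPf naj; apply: big1 => t _.
  by move: naj; rewrite eqSS -val_eqE /= => ->.
under eq_bigr => t _ do rewrite eqxx /= path_kword.
under [RHS]eq_bigr => i _ do rewrite cntE big_distrr /=.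
rewrite exchange_big /=; apply: eq_bigr => t _.
rewrite (bigD1 (thead t)) //= big1 ?addn0 ?kword_head ?eqxx ?muln1 //=.
  by case: (al _ _ _); case: (sorted _ _).
by move=> i; rewrite eqSS eq_sym -val_eqE /= => /negbTE -> /=; rewrite muln0.
Qed.

Lemma cnt_one n (j : 'I_n) : cnt n 1 j.+1 = 1.
Proof.
rewrite cntE sum_tupleS (bigD1 j) //= [X in _ + X]big1 ?addn0; last first.
  move=> a /negPf naj; apply: big1 => t _.
  by move: naj; rewrite eqSS -val_eqE /= => ->.
rewrite (big_pred1 [tuple]) => [|t]; first by rewrite /kword /= eqxx.
by rewrite (tuple0 t) /= eqxx.
Qed.

Local Open Scope ring_scope.

Lemma al_M n (j i : 'I_n) : (3 <= n)%N ->
  al n j.+1 i.+1 = (j <= i.+1)%N || ((j == n.-1 :> nat) && (i == (n - 3)%N :> nat)).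
Proof. move=> hn; have hj := ltn_ord j; have hi := ltn_ord i; rewrite /al /kcomm. apply/idP/idP; lia. Qed.

Lemma sum_ind (R : nzRingType) s k (F : nat -> R) : (k < s)%N ->
  \sum_(i < s) ((i : nat) == k)%:R * F i = F k.
Proof.
move=> ks; rewrite (bigD1 (Ordinal ks)) //= eqxx mul1r big1 ?addr0 // => i ni.
by rewrite (_ : (i:nat) == k = false) ?mul0r //; apply/negbTE; move: ni; rewrite -val_eqE.
Qed.

Arguments sum_ind {R s k} F.

Lemma sum_indl (R : nzRingType) s k (F : nat -> R) : (k < s)%N ->
  \sum_(i < s) (k == (i : nat))%:R * F i = F k.
Proof. move=> ks; rewrite -(sum_ind F ks); apply: eq_bigr => i _; by rewrite eq_sym. Qed.
Arguments sum_indl {R s k} F.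

Lemma det_cramer (R : comNzRingType) n (a : nat -> nat -> R) (x : nat -> R) (c : R) :
  (forall j, (j < n.+1)%N -> \sum_(i < n.+1) a j i * x i = c) ->
  (forall j i, (1 <= j < i)%N -> (i <= n)%N -> a j i = a j.-1 i) ->
  \det (\matrix_(j < n.+1, i < n.+1) a j i) * x 0%N
    = c * \prod_(j < n) (a j.+1 j.+1 - a j j.+1).
Proof.
move=> Hrow Hup.
set A := \matrix_(j < n.+1, i < n.+1) a j i.
pose D : 'M[R]_n.+1 := \matrix_(j, i) (((i : nat) == j)%:R - ((i.+1 : nat) == j)%:R).
have detD : \det D = 1.
  rewrite det_trig; last first.
    apply/forallP => i; apply/forallP => j; apply/implyP => ij.
    have e1 : (j == i :> nat) = false by apply/negbTE; lia.
    have e2 : (j.+1 == i :> nat) = false by apply/negbTE; lia.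
    by rewrite /D mxE e1 e2 subrr.
  apply: big1 => i _.
  have e2 : (i.+1 == i :> nat) = false by apply/negbTE; lia.
  by rewrite mxE eqxx e2 subr0.
pose X : 'cV[R]_n.+1 := \col_i x i.
have DAe : forall j i : 'I_n.+1, (D *m A) j i = a j i - (if (0 < j)%N then a j.-1 i else 0).
  move=> j i; rewrite mxE.
  under eq_bigr => l _ do rewrite !mxE mulrBl.
  rewrite sumrB (sum_ind (fun l => a l i)) //.
  case: j => [[|j'] hj] /=.
    by rewrite big1 ?subr0 // => l _; rewrite mul0r.
  congr (_ - _).
  under eq_bigr => l _ do rewrite eqSS.
  by rewrite (sum_ind (fun l => a l i)) //=; lia.
set B := D *m A.
have detB : \det B = \det A by rewrite det_mulmx detD mul1r.
have BX : forall j : 'I_n.+1, (B *m X) j 0 = ((j : nat) == 0%N)%:R * c.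
  move=> j; rewrite mxE.
  under eq_bigr => i _ do rewrite DAe mxE mulrBl.
  rewrite sumrB Hrow //.
  case: j => [[|j'] hj] /=; first by rewrite big1 ?subr0 ?mul1r // => i _; rewrite mul0r.
  by rewrite Hrow ?subrr ?mul0r //; lia.
have E := congr1 (fun M => (M *m X) 0 0) (mul_adj_mx B).
move: E; rewrite /= -mulmxA mul_scalar_mx.
rewrite [X in _ = X]mxE [X in _ = _ * X]mxE mxE.
rewrite (bigD1 0) //= big1 ?addr0; last first.
  move=> l nl; rewrite BX (_ : (l == 0%N :> nat) = false) ?mul0r ?mulr0 //.
  by apply/negbTE; move: nl; rewrite -val_eqE.
rewrite BX mul1r mxE /cofactor /= expr0 mul1r -detB mulrC => <-; congr (_ * _).
rewrite det_trig; last first.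
  apply/forallP => i; apply/forallP => j; apply/implyP => ij.
  rewrite mxE mxE DAe /= Hup ?subrr //; lia.
by apply: eq_bigr => i _; rewrite mxE mxE DAe.
Qed.


Fixpoint Abar (r : nat) : {poly int} :=
  if r is r1.+1 then (if r1 is r2.+1 then 'X * (Abar r1 - Abar r2) else 'X - 1) else 1.

Definition xs (s j : nat) : {poly int} := if j is j'.+1 then 'X^(s - j) * Abar j' else 'X^(s.-1).

Lemma Tsum s d : (d <= s)%N -> \sum_(s - d <= i < s) xs s i = 'X^d * Abar (s - d) - Abar s.
Proof.
elim: d => [|d IH] hd; first by rewrite subn0 big_geq // expr0 mul1r subrr.
rewrite big_ltn; last lia.
have -> : ((s - d.+1).+1 = s - d)%N by lia.
rewrite IH; last lia.
case E: (s - d.+1)%N => [|k] /=.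
  have -> : s.-1 = d by lia.
  have -> : (s - d = 1)%N by lia.
  rewrite exprS /=; ring.
have -> : (s - k.+1 = d.+1)%N by lia.
have -> : (s - d = k.+2)%N by lia.
rewrite /= exprS; ring.
Qed.


Lemma sum_ge (R : nzRingType) s k (F : nat -> R) : (k <= s)%N ->
  \sum_(i < s) ((k <= i)%N%:R * F i) = \sum_(k <= i < s) F i.
Proof.
move=> ks; rewrite -(big_mkord xpredT (fun i => (k <= i)%N%:R * F i)).
rewrite (big_cat_nat (leq0n k) ks) /= big_nat_cond big1 ?add0r.
  by apply: eq_big_nat => i /andP[-> _]; rewrite mul1r.
by move=> i /andP[/andP[_ ik] _]; rewrite leqNgt ik mul0r.
Qed.

Lemma xs_X s j : (j < s)%N -> 'X * xs s j = 'X^(s - j.-1) * Abar j.-1.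
Proof.
case: j => [|j] js /=.
  by rewrite subn0 mulr1 -exprS; congr (_ ^+ _); lia.
by rewrite [in LHS]mulrA -exprS; congr (_ ^+ _ * _); lia.
Qed.

Definition aN (j i : nat) : {poly int} := 'X *+ (j == i) - ((j <= i.+1)%N%:R)%:P.

Lemma aN_eq j i : aN j i = (if j == i then 'X else 0) - (if (j <= i.+1)%N then 1 else 0).
Proof. by rewrite /aN; case: (j == i); case: (j <= i.+1)%N; rewrite /= ?mulr1n ?mulr0n ?polyC1 ?polyC0. Qed.

Lemma rowN s j : (j < s)%N -> \sum_(i < s) aN j i * xs s i = Abar s.
Proof.
move=> js.
under eq_bigr => i _ do rewrite /aN rmorph_nat mulrBl mulrnAl -mulr_natl.
rewrite sumrB (sum_indl (fun i => 'X * xs s i)) // xs_X //.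
have E : forall i, (j <= i.+1)%N = (j.-1 <= i)%N by move=> i; lia.
under eq_bigr => i _ do rewrite E.
rewrite sum_ge; last lia.
have := @Tsum s (s - j.-1) (leq_subr _ _).
have -> : (s - (s - j.-1))%N = j.-1 by lia.
move=> ->; ring.
Qed.

Lemma Xn_neq0 k : ('X^k : {poly int}) != 0.
Proof. by rewrite expf_neq0 // polyX_eq0. Qed.

Lemma ApolyE r : Apoly r = Abar r.
Proof.
case: r => [|s]; first by rewrite /Apoly /char_poly det_mx00.
have Hm : char_poly_mx (Nmat s.+1) = \matrix_(j < s.+1, i < s.+1) aN j i.
  by apply/matrixP => j i; rewrite !mxE.
rewrite /Apoly /char_poly Hm.
have E2 : \prod_(j < s) (aN j.+1 j.+1 - aN j j.+1) = 'X^s.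
  rewrite (_ : 'X^s = \prod_(j < s) ('X : {poly int})); last by rewrite prodr_const card_ord.
  apply: eq_bigr => j _.
  rewrite !aN_eq eqxx (_ : (j == j.+1 :> nat) = false); last by apply/negbTE; lia.
  rewrite (_ : (j <= j.+2)%N = true); last by lia.
  rewrite leqnSn; ring.
have E1 : xs s.+1 0 = 'X^s by [].
have H1 : forall j, (j < s.+1)%N -> \sum_(i < s.+1) aN j i * xs s.+1 i = Abar s.+1.
  by move=> j js; apply: rowN.
have H2 : forall j i, (1 <= j < i)%N -> (i <= s)%N -> aN j i = aN j.-1 i.
  move=> j i ji iS.
  have e1 : (j == i) = false by apply/negbTE; lia.
  have e2 : (j.-1 == i) = false by apply/negbTE; lia.
  have e3 : (j <= i.+1)%N = true by lia.
  have e4 : (j.-1 <= i.+1)%N = true by lia.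
  by rewrite !aN_eq e1 e2 e3 e4.
have := @det_cramer _ s aN (xs s.+1) (Abar s.+1) H1 H2.
rewrite E2 E1.
move: (\det _) (Abar s.+1) => D A H.
exact: (mulIf (Xn_neq0 s) H).
Qed.

Definition xm n j := if j == n.-1 then xs n n.-2 else xs n j.
Definition aM n (j i : nat) : {poly int} :=
  'X *+ (j == i) - (((j <= i.+1) || ((j == n.-1) && (i == n - 3)))%N%:R)%:P.
Definition Kc n := Abar n + xs n n.-1 - xs n n.-2.

Lemma aM_eq n j i : aM n j i = (if j == i then 'X else 0) -
   (if ((j <= i.+1) || ((j == n.-1) && (i == n - 3)))%N then 1 else 0).
Proof. by rewrite /aM; case: (j == i); case: (_ || _); rewrite /= ?mulr1n ?mulr0n ?polyC1 ?polyC0. Qed.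

Lemma xmE n i : xm n i = xs n i + (i == n.-1)%:R * (xs n n.-2 - xs n n.-1).
Proof. rewrite /xm; case: eqP => [->|_]; rewrite ?mul1r ?mul0r ?addr0 //; ring. Qed.

Lemma rowM1 n j : (3 <= n)%N -> (j < n.-1)%N -> \sum_(i < n) aM n j i * xm n i = Kc n.
Proof.
move=> hn jn.
have E : forall i, aM n j i = aN j i.
  move=> i; rewrite aM_eq aN_eq (_ : (j == n.-1) = false) ?andbF ?orbF //; apply/negbTE; lia.
under eq_bigr => i _ do rewrite E xmE mulrDr mulrCA.
rewrite big_split /= rowN; last lia.
rewrite (sum_ind (fun i => aN j i * (xs n n.-2 - xs n n.-1))); last lia.
rewrite aN_eq (_ : (j == n.-1) = false); last by apply/negbTE; lia.
rewrite (_ : (j <= n.-1.+1)%N = true); last by lia.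
rewrite /Kc; ring.
Qed.

Lemma rowM2 n : (3 <= n)%N -> \sum_(i < n) aM n n.-1 i * xm n i = Kc n.
Proof.
move=> hn.
have E : forall i, (i < n)%N -> aM n n.-1 i = aM n n.-2 i + (n.-1 == i)%:R * 'X - (n.-2 == i)%:R * 'X.
  move=> i hi; rewrite !aM_eq.
  have -> : ((n.-1 <= i.+1) || ((n.-1 == n.-1) && (i == n - 3)))%N =
            ((n.-2 <= i.+1) || ((n.-2 == n.-1) && (i == n - 3)))%N by apply/idP/idP; lia.
  have nb : ~~ ((n.-1 == i) && (n.-2 == i)) by lia.
  move: nb; case: (n.-1 == i); case: (n.-2 == i) => //= _; rewrite ?mulr1n ?mulr0n; ring.
rewrite (eq_bigr (fun i : 'I_n => aM n n.-2 i * xm n i + ((n.-1 == i)%:R * ('X * xm n i)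
   - (n.-2 == i)%:R * ('X * xm n i)))); last by move=> i _; rewrite E //; ring.
rewrite big_split sumrB /= rowM1 //; last lia.
rewrite (sum_indl (fun i => 'X * xm n i)); last lia.
rewrite (sum_indl (fun i => 'X * xm n i)); last lia.
rewrite /xm eqxx (_ : n.-2 == n.-1 = false); last by apply/negbTE; lia.
ring.
Qed.

Lemma KpolyE n : (3 <= n)%N -> Kpoly n = Kc n.
Proof.
case: n => [|s] // hn.
have Hm : char_poly_mx (Mmat s.+1) = \matrix_(j < s.+1, i < s.+1) aM s.+1 j i.
  by apply/matrixP => j i; rewrite !mxE.
rewrite /Kpoly /char_poly Hm.
have E2 : \prod_(j < s) (aM s.+1 j.+1 j.+1 - aM s.+1 j j.+1) = 'X^s.
  rewrite (_ : 'X^s = \prod_(j < s) ('X : {poly int})); last by rewrite prodr_const card_ord.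
  apply: eq_bigr => j _.
  rewrite !aM_eq eqxx (_ : (j == j.+1 :> nat) = false); last by apply/negbTE; lia.
  rewrite (_ : ((j <= j.+2) || _)%N = true); last by lia.
  rewrite (_ : ((j.+1 <= j.+2) || _)%N = true); last by lia.
  ring.
have E1 : xm s.+1 0 = 'X^s.
  by rewrite /xm /= (_ : (0 == s) = false) //; apply/negbTE; lia.
have H1 : forall j, (j < s.+1)%N -> \sum_(i < s.+1) aM s.+1 j i * xm s.+1 i = Kc s.+1.
  move=> j js; case: (ltnP j s) => [jl|jg].
    by apply: rowM1.
  have -> : j = s by lia.
  by have := @rowM2 s.+1 hn.
have H2 : forall j i, (1 <= j < i)%N -> (i <= s)%N -> aM s.+1 j i = aM s.+1 j.-1 i.
  move=> j i ji iS.
  have e1 : (j == i) = false by apply/negbTE; lia.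
  have e2 : (j.-1 == i) = false by apply/negbTE; lia.
  have e3 : ((j <= i.+1) || ((j == s.+1.-1) && (i == s.+1 - 3)))%N = true by lia.
  have e4 : ((j.-1 <= i.+1) || ((j.-1 == s.+1.-1) && (i == s.+1 - 3)))%N = true by lia.
  by rewrite !aM_eq e1 e2 e3 e4.
have := @det_cramer _ s (aM s.+1) (xm s.+1) (Kc s.+1) H1 H2.
rewrite E2 E1.
move: (\det _) (Kc s.+1) => D A H.
exact: (mulIf (Xn_neq0 s) H).
Qed.


Lemma Eind n (M : 'I_n -> 'I_n -> int) (f : nat -> 'I_n -> int) (U : 'I_n -> nat -> int) (r : nat -> int) :
  (forall j, f 0%N j = 1) ->
  (forall l j, f l.+1 j = \sum_i M j i * f l i) ->
  (forall j, U j 0%N = r 0%N) ->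
  (forall j k, U j k.+1 - \sum_i M j i * U i k = r k.+1) ->
  forall k j, \sum_(l < k.+1) f (k - l)%N j * r l = U j k.
Proof.
move=> f0 fS U0 US; elim=> [|k IH] j.
  by rewrite big_ord_recr big_ord0 /= f0 add0r mul1r U0.
rewrite big_ord_recr /= subnn f0 mul1r.
have -> : \sum_(l < k.+1) f (k.+1 - l)%N j * r l = \sum_i M j i * U i k.
  have E : forall l : 'I_k.+1, (k.+1 - l = (k - l).+1)%N by move=> l; have := ltn_ord l; lia.
  under eq_bigr => l _ do rewrite E fS mulr_suml.
  rewrite exchange_big /=; apply: eq_bigr => i _.
  rewrite -IH mulr_sumr; apply: eq_bigr => l _; ring.
by rewrite -(US j k); ring.
Qed.

Lemma cnum_cnt n k m : cnum n k m = cnt n k m.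
Proof. by rewrite /cnum /cnt; apply: eq_card => w; rewrite !inE lexmin_iff. Qed.

Lemma Abar_coef_pair r : (forall p, (r < p)%N -> (Abar r)`_p = 0) /\ (forall p, (r.+1 < p)%N -> (Abar r.+1)`_p = 0).
Proof.
elim: r => [|r [IH1 IH2]].
  split=> p hp.
    have e : (p == 0%N) = false by apply/negbTE; lia.
    by rewrite coef1 e.
  have e1 : (p == 0%N) = false by apply/negbTE; lia.
  have e2 : (p == 1%N) = false by apply/negbTE; lia.
  by rewrite /= coefB coefX coef1 e1 e2 subr0.
split=> // p hp.
have e1 : (p == 0%N) = false by apply/negbTE; lia.
have -> : Abar r.+2 = 'X * (Abar r.+1 - Abar r) by [].
rewrite coefXM e1 coefB IH2; last lia.
by rewrite IH1 ?subr0 //; lia.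
Qed.

Lemma Abar_coef r p : (r < p)%N -> (Abar r)`_p = 0.
Proof. by case: (Abar_coef_pair r) => H _; apply: H. Qed.

Lemma xs_coef n j p : (j < n)%N -> (n <= p)%N -> (xs n j)`_p = 0.
Proof.
case: j => [|j] jn np /=.
  have e : (p == n.-1) = false by apply/negbTE; lia.
  by rewrite coefXn e.
rewrite coefXnM; case: ifP => // _; apply: Abar_coef; lia.
Qed.

Lemma xm_coef n j p : (j < n)%N -> (n <= p)%N -> (xm n j)`_p = 0.
Proof. move=> jn np; rewrite /xm; case: ifP => _; apply: xs_coef => //; lia. Qed.

Lemma rowc n (j : 'I_n) : (3 <= n)%N ->
  'X * xm n j - \sum_(i < n) (((al n j.+1 i.+1)%:R : int))%:P * xm n i = Kc n.
Proof.
move=> hn.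
have H : \sum_(i < n) aM n j i * xm n i = Kc n.
  case: (ltnP j n.-1) => [jl|jg]; first exact: rowM1.
  have -> : (j : nat) = n.-1 by have := ltn_ord j; lia.
  exact: rowM2.
rewrite -H.
under [RHS]eq_bigr => i _ do rewrite /aM mulrBl mulrnAl -mulr_natl.
rewrite sumrB (sum_indl (fun i => 'X * xm n i)) //.
congr (_ - _); apply: eq_bigr => i _; by rewrite al_M.
Qed.

Lemma coefrow n (j : 'I_n) p : (3 <= n)%N ->
  ('X * xm n j)`_p - \sum_(i < n) (al n j.+1 i.+1)%:R * (xm n i)`_p = (Kc n)`_p.
Proof.
move=> hn; rewrite -(@rowc n j hn) coefB coef_sum; congr (_ - _).
by apply: eq_bigr => i _; rewrite coefCM.
Qed.

Theorem lemma5 (n m : nat) (hn : (3 <= n)%N) (hm : (2 <= m <= n.-1)%N) :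
  forall k : nat,
    \sum_(j < k) (cnum n (k - j) m)%:Z * (recip n (Kpoly n))`_j
    = (recip m.-1 (Apoly (m - 2)))`_k.
Proof.
move=> k.
rewrite KpolyE // ApolyE.
have m0n : (m.-1 < n)%N by lia.
pose j0 : 'I_n := Ordinal m0n.
pose f l (j : 'I_n) : int := (cnt n l.+1 j.+1)%:Z.
pose Mi (j i : 'I_n) : int := (al n j.+1 i.+1)%:R.
pose U (j : 'I_n) (q : nat) : int := if (q < n)%N then (xm n j)`_(n.-1 - q) else 0.
pose r (q : nat) : int := (recip n (Kc n))`_q.
have f0 : forall j, f 0%N j = 1 by move=> j; rewrite /f cnt_one.
have fS : forall l j, f l.+1 j = \sum_i Mi j i * f l i.
  move=> l j; rewrite /f cnt_rec (big_morph Posz PoszD (erefl _)).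
  by apply: eq_bigr => i _; rewrite PoszM /Mi natz.
have rE : forall q, r q = if (q <= n)%N then (Kc n)`_(n - q) else 0.
  by move=> q; rewrite /r /recip coef_poly ltnS.
have U0 : forall j, U j 0%N = r 0%N.
  move=> j; rewrite /U rE (_ : (0 < n)%N) //; last lia.
  rewrite leq0n !subn0 -(@coefrow n j n hn) coefXM (_ : (n == 0%N) = false); last by apply/negbTE; lia.
  rewrite big1 ?subr0 // => i _; rewrite xm_coef ?mulr0 //.
have US : forall j q, U j q.+1 - \sum_i Mi j i * U i q = r q.+1.
  move=> j q; rewrite /U rE.
  case: (ltnP q.+1 n) => [qn|qn].
    have e1 : (q < n)%N by lia.
    have e3 : ((n - q.+1)%N == 0%N) = false by apply/negbTE; lia.
    rewrite e1 -(@coefrow n j _ hn) coefXM e3.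
    have e4 : ((n - q.+1).-1 = n.-1 - q.+1)%N by lia.
    have e5 : (n - q.+1)%N = (n.-1 - q)%N by lia.
    by rewrite e4 e5.
  case: (eqVneq q.+1 n) => [qe|qne].
    have e1 : (q < n)%N by lia.
    rewrite e1 -(@coefrow n j _ hn) coefXM qe subnn eqxx.
    have e4 : (n.-1 - q = 0)%N by lia.
    by congr (_ - _); rewrite e4.
  have e1 : (q < n)%N = false by apply/negbTE; lia.
  rewrite e1 big1 ?subr0 // => i _; by rewrite mulr0.
have Ei := @Eind n Mi f U r f0 fS U0 US.
case: k => [|K].
  rewrite big_ord0 /recip coef_poly /=.
  by rewrite Abar_coef //; lia.
rewrite (eq_bigr (fun l : 'I_K.+1 => f (K - l)%N j0 * r l)); last first.
  move=> l _; rewrite /f /r cnum_cnt.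
  have e1 : (K.+1 - l = (K - l).+1)%N by have := ltn_ord l; lia.
  have e2 : m = (m.-1).+1 by lia.
  by rewrite e1 {1}e2.
rewrite Ei /U /recip coef_poly.
have e0 : xm n j0 = 'X^(n - (m - 2).+1) * Abar (m - 2).
  rewrite /xm /= (_ : (m.-1 == n.-1) = false); last by apply/negbTE; lia.
  by have -> : m.-1 = (m - 2).+1 by lia.
rewrite e0.
case: (ltnP K n) => Kn.
  rewrite coefXnM.
  case: (ltnP (n.-1 - K) (n - (m - 2).+1)) => h.
    by have -> : (K.+1 < m.-1.+1)%N = false by apply/negbTE; lia.
  have -> : (K.+1 < m.-1.+1)%N = true by lia.
  by congr (_`_ _); lia.
by have -> : (K.+1 < m.-1.+1)%N = false by apply/negbTE; lia.
Qed.
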